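(* Let $p$ be a prime, and let $m$ and $n$ be integers with $n \geq 1$ and $n+2 \leq m \leq (p-1)/2$. Let $\lambda = (\lambda_1, \ldots, \lambda_m)$ be a sequence of integers with $p \geq \lambda_1 \geq \cdots \geq \lambda_m > 0$ and $\sum_{k=1}^m \lambda_k \geq np + 1$. Let $\mu = (\mu_1, \ldots, \mu_{2m - 1})$ be a sequence of integers such that $\mu_{i + j - 1} \geq \min\{\lambda_i + \lambda_j - 1, p\}$ for all $1 \leq i, j \leq m$. Then \[\sum_{k = 1}^{2m-1} \mu_k \geq (2n + 1)p.\] *)

(* Defs.v *)
From Stdlib Require Import ZArith Znumtheory List.
Open Scope Z_scope.

Definition zsum1 (N : nat) (f : nat -> Z) : Z :=
  fold_right Z.add 0 (map f (seq 1 N)).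

(* Main.v *)
Require Import Defs.
From Stdlib Require Import ZArith Znumtheory List Lia.
Open Scope Z_scope.

Lemma zsum1_0 f : zsum1 0 f = 0.
Proof. reflexivity. Qed.

Lemma zsum1_S N f : zsum1 (S N) f = f 1%nat + zsum1 N (fun k => f (S k)).
Proof.
  unfold zsum1. change (seq 1 (S N)) with (1%nat :: seq 2 N).
  rewrite <- seq_shift. cbn [map fold_right]. rewrite map_map. reflexivity.
Qed.

Lemma zsum1_add a b f : zsum1 (a + b) f = zsum1 a f + zsum1 b (fun k => f (a + k)%nat).
Proof.
  revert f; induction a as [|a IH]; intro f.
  - simpl. unfold zsum1 at 2. simpl. reflexivity.
  - simpl (S a + b)%nat. rewrite !zsum1_S, IH. simpl. ring.
Qed.

Lemma zsum1_le N f g : (forall k, (1 <= k <= N)%nat -> f k <= g k) -> zsum1 N f <= zsum1 N g.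
Proof.
  revert f g; induction N as [|N IH]; intros f g H.
  - rewrite !zsum1_0; lia.
  - rewrite !zsum1_S. pose proof (H 1%nat ltac:(lia)).
    assert (zsum1 N (fun k => f (S k)) <= zsum1 N (fun k => g (S k))).
    { apply IH. intros k Hk. apply H. lia. }
    lia.
Qed.

Lemma zsum1_addf N f g : zsum1 N (fun k => f k + g k) = zsum1 N f + zsum1 N g.
Proof.
  revert f g; induction N as [|N IH]; intros f g.
  - reflexivity.
  - rewrite !zsum1_S, IH. ring.
Qed.

Lemma zsum1_const N c : zsum1 N (fun _ => c) = Z.of_nat N * c.
Proof.
  induction N as [|N IH].
  - reflexivity.
  - rewrite zsum1_S, IH. lia.
Qed.

Lemma zig : forall m (lam mu : nat -> Z), (1 <= m)%nat ->
  (forall i, (1 <= i <= m)%nat -> mu (2*i-1)%nat >= 2*lam i - 1) ->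
  (forall i, (1 <= i < m)%nat -> mu (2*i)%nat >= lam i + lam (S i) - 1) ->
  zsum1 (2*m-1) mu >= 4*zsum1 m lam - lam 1%nat - lam m - 2*Z.of_nat m + 1.
Proof.
  induction m as [|m IH]; intros lam mu Hm H1 H2; [lia|].
  destruct m as [|m'].
  - change (2*1-1)%nat with 1%nat. rewrite !zsum1_S, !zsum1_0. pose proof (H1 1%nat ltac:(lia)) as H. change (2*1-1)%nat with 1%nat in H. lia.
  - set (m := S m') in *.
    replace (2 * S m - 1)%nat with (S (S (2*m-1))) by lia.
    rewrite !zsum1_S.
    specialize (IH (fun k => lam (S k)) (fun k => mu (S (S k))) ltac:(lia)).
    cbv beta in IH.
    assert (A : zsum1 (2 * m - 1) (fun k => mu (S (S k))) >=
      4 * zsum1 m (fun k => lam (S k)) - lam 2%nat - lam (S m) - 2 * Z.of_nat m + 1).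
    { apply IH.
      - intros i Hi. pose proof (H1 (S i) ltac:(lia)).
        replace (2 * S i - 1)%nat with (S (S (2*i-1))) in H by lia. exact H.
      - intros i Hi. pose proof (H2 (S i) ltac:(lia)).
        replace (2 * S i)%nat with (S (S (2*i))) in H by lia. exact H. }
    pose proof (H1 1%nat ltac:(lia)) as B1. change (2*1-1)%nat with 1%nat in B1.
    pose proof (H2 1%nat ltac:(lia)) as B2. change (2*1)%nat with 2%nat in B2.
    lia.
Qed.

Lemma mono m (lam : nat -> Z) :
  (forall k : nat, (1 <= k < m)%nat -> lam k >= lam (S k)) ->
  forall i j, (1 <= i <= j)%nat -> (j <= m)%nat -> lam j <= lam i.
Proof.
  intros H i j Hij Hj.
  replace j with (i + (j - i))%nat by lia.
  assert (Hd : (i + (j - i) <= m)%nat) by lia. revert Hd.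
  generalize (j - i)%nat as d. induction d as [|d IH]; intro Hd.
  - rewrite Nat.add_0_r; lia.
  - pose proof (H (i + d)%nat ltac:(lia)). replace (i + S d)%nat with (S (i+d)) by lia.
    specialize (IH ltac:(lia)). lia.
Qed.

Lemma gen (p : Z) : forall n : nat, (1 <= n)%nat -> forall (m : nat) (lam mu : nat -> Z),
  (n + 2 <= m)%nat -> 2 * Z.of_nat m + 1 <= p -> lam 1%nat <= p ->
  (forall k : nat, (1 <= k < m)%nat -> lam k >= lam (S k)) ->
  lam m > 0 ->
  zsum1 m lam >= Z.of_nat n * p + 1 ->
  (forall i j : nat, (1 <= i <= m)%nat -> (1 <= j <= m)%nat ->
     mu (i + j - 1)%nat >= Z.min (lam i + lam j - 1) p) ->
  zsum1 (2 * m - 1) mu >= (2 * Z.of_nat n + 1) * p.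
Proof.
  induction n as [|n IH]; intros Hn m lam mu Hm Hp HL1 Hdec Hpos HS Hmu; [lia|].
  pose proof (mono m lam Hdec) as Hmo.
  assert (Hb : forall k, (1 <= k <= m)%nat -> 1 <= lam k <= p).
  { intros k Hk. pose proof (Hmo 1%nat k ltac:(lia) ltac:(lia)).
    pose proof (Hmo k m ltac:(lia) ltac:(lia)). lia. }
  destruct m as [|m1]; [lia|].
  set (L := lam 1%nat) in *.
  set (lm := lam (S m1)) in *.
  set (R := zsum1 m1 (fun k => lam (S k))).
  assert (HSR : zsum1 (S m1) lam = L + R) by (unfold R, L; apply zsum1_S).
  assert (Hsplit : zsum1 (2 * S m1 - 1) mu =
     mu 1%nat + zsum1 m1 (fun k => mu (S k)) + zsum1 m1 (fun i => mu (S m1 + i)%nat)).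
  { replace (2 * S m1 - 1)%nat with (S m1 + m1)%nat by lia.
    rewrite zsum1_add, zsum1_S. ring. }
  assert (Hmu1 : mu 1%nat >= Z.min (2 * L - 1) p).
  { pose proof (Hmu 1%nat 1%nat ltac:(lia) ltac:(lia)) as H.
    change (1+1-1)%nat with 1%nat in H. unfold L. lia. }
  assert (HmuS : forall k, (1 <= k <= m1)%nat -> mu (S k) >= Z.min (L + lam (S k) - 1) p).
  { intros k Hk. pose proof (Hmu 1%nat (S k) ltac:(lia) ltac:(lia)) as H.
    replace (1 + S k - 1)%nat with (S k) in H by lia. exact H. }
  assert (HmuM : forall i, (1 <= i <= m1)%nat -> mu (S m1 + i)%nat >= Z.min (lam (S i) + lm - 1) p).
  { intros i Hi. pose proof (Hmu (S i) (S m1) ltac:(lia) ltac:(lia)) as H.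
    replace (S i + S m1 - 1)%nat with (S m1 + i)%nat in H by lia. exact H. }
  assert (HL : 1 <= L <= p) by (apply Hb; lia).
  assert (Hlm : 1 <= lm <= p) by (apply Hb; lia).
  assert (Hl2 : 1 <= lam 2%nat <= p) by (apply Hb; lia).
  assert (HlmL : lm <= L) by (apply Hmo; lia).
  destruct (Z_le_gt_dec (p + 1) (L + lam 2%nat)) as [CA|CA].
  -
    assert (Hmu2 : mu 2%nat >= p) by (pose proof (HmuS 1%nat ltac:(lia)); lia).
    assert (Hmu1' : mu 1%nat >= p) by (pose proof (Hmo 1%nat 2%nat ltac:(lia) ltac:(lia)); lia).
    destruct n as [|n0].
    +
      destruct m1 as [|m2]; [lia|].
      assert (T1 : zsum1 (S m2) (fun k => mu (S k)) >= p + Z.of_nat m2 * L).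
      { rewrite zsum1_S.
        assert (zsum1 m2 (fun k => Z.of_nat m2 * 0 + L) <= zsum1 m2 (fun k => mu (S (S k)))).
        { apply zsum1_le. intros k Hk. pose proof (HmuS (S k) ltac:(lia)).
          pose proof (Hb (S (S k)) ltac:(lia)). lia. }
        rewrite zsum1_const in H. lia. }
      assert (T2 : zsum1 (S m2) (fun i => mu (S (S m2) + i)%nat) >= R).
      { unfold R. apply Z.le_ge, zsum1_le. intros k Hk. pose proof (HmuM k Hk).
        pose proof (Hb (S k) ltac:(lia)). lia. }
      rewrite Hsplit. assert (Z.of_nat m2 * L >= L) by nia. lia.
    +
      assert (IH' := IH ltac:(lia) m1 (fun k => lam (S k)) (fun k => mu (S (S k)))).
      cbv beta in IH'.
      assert (H2 : zsum1 (2 * m1 - 1) (fun k => mu (S (S k))) >= (2 * Z.of_nat (S n0) + 1) * p).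
      { apply IH'.
        - lia.
        - lia.
        - lia.
        - intros k Hk. apply Hdec. lia.
        - lia.
        - fold R. lia.
        - intros i j Hi Hj. pose proof (Hmu (S i) (S j) ltac:(lia) ltac:(lia)) as H.
          replace (S i + S j - 1)%nat with (S (S (i + j - 1))) in H by lia. exact H. }
      replace (2 * S m1 - 1)%nat with (S (S (2 * m1 - 1))) by lia.
      rewrite !zsum1_S. lia.
  - destruct (Z_le_gt_dec p (2 * L - 1)) as [CB|CB].
    +
      assert (T1 : zsum1 m1 (fun k => mu (S k)) >= Z.of_nat m1 * (L - 1) + R).
      { unfold R. rewrite <- zsum1_const, <- zsum1_addf. apply Z.le_ge, zsum1_le.
        intros k Hk. pose proof (HmuS k Hk). pose proof (Hmo 2%nat (S k) ltac:(lia) ltac:(lia)).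
        lia. }
      assert (T2 : zsum1 m1 (fun i => mu (S m1 + i)%nat) >= R).
      { unfold R. apply Z.le_ge, zsum1_le. intros k Hk. pose proof (HmuM k Hk).
        pose proof (Hb (S k) ltac:(lia)). lia. }
      rewrite Hsplit. assert (Z.of_nat m1 * (L - 1) >= 2 * (L - 1)) by nia. lia.
    +
      assert (T1 : zsum1 m1 (fun k => mu (S k)) >= Z.of_nat m1 * (L - 1) + R).
      { unfold R. rewrite <- zsum1_const, <- zsum1_addf. apply Z.le_ge, zsum1_le.
        intros k Hk. pose proof (HmuS k Hk). pose proof (Hmo 1%nat (S k) ltac:(lia) ltac:(lia)) as HH; change (lam 1%nat) with L in HH.
        lia. }
      assert (T2 : zsum1 m1 (fun i => mu (S m1 + i)%nat) >= R + Z.of_nat m1 * (lm - 1)).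
      { unfold R. rewrite <- zsum1_const, <- zsum1_addf. apply Z.le_ge, zsum1_le.
        intros k Hk. pose proof (HmuM k Hk). pose proof (Hmo 1%nat (S k) ltac:(lia) ltac:(lia)) as HH; change (lam 1%nat) with L in HH.
        lia. }
      assert (Cv : zsum1 (2 * S m1 - 1) mu >=
         2 * L - 1 + Z.of_nat m1 * (L - 1) + 2 * R + Z.of_nat m1 * (lm - 1)) by (rewrite Hsplit; lia).
      assert (Zv : zsum1 (2 * S m1 - 1) mu >= 4 * (L + R) - L - lm - 2 * Z.of_nat (S m1) + 1).
      { rewrite <- HSR. apply zig; [lia| |].
        - intros i Hi. pose proof (Hmu i i Hi Hi) as H.
          replace (i + i - 1)%nat with (2 * i - 1)%nat in H by lia.
          pose proof (Hmo 1%nat i ltac:(lia) ltac:(lia)) as HH; change (lam 1%nat) with L in HH. lia.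
        - intros i Hi. pose proof (Hmu i (S i) ltac:(lia) ltac:(lia)) as H.
          replace (i + S i - 1)%nat with (2 * i)%nat in H by lia.
          pose proof (Hmo 1%nat i ltac:(lia) ltac:(lia)) as HH; change (lam 1%nat) with L in HH.
          pose proof (Hmo 1%nat (S i) ltac:(lia) ltac:(lia)) as HH2; change (lam 1%nat) with L in HH2. lia. }
      set (X := zsum1 (2 * S m1 - 1) mu) in *.
      set (M := Z.of_nat (S m1)) in *.
      set (N := Z.of_nat (S n)) in *.
      assert (EM : Z.of_nat m1 = M - 1) by lia.
      rewrite EM in Cv.
      assert (HM3 : M >= 3) by lia.
      assert (HN : 1 <= N) by lia.
      assert (HNM : N + 2 <= M) by lia.
      assert (HSp : L + R >= N * p + 1) by lia.
      assert (A1 : (M - 1) * X >= (M - 1) * (4 * (L + R) - L - lm - 2 * M + 1))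
        by (apply Z.le_ge, Z.mul_le_mono_nonneg_l; lia).
      assert (K1 : M * X >= (2 * M - 1) * (2 * (L + R) - M)).
      { replace (M * X) with ((M - 1) * X + X) by ring.
        replace ((2 * M - 1) * (2 * (L + R) - M)) with
          ((M - 1) * (4 * (L + R) - L - lm - 2 * M + 1) +
           (2 * L - 1 + (M - 1) * (L - 1) + 2 * R + (M - 1) * (lm - 1))) by ring.
        lia. }
      assert (K2 : (2 * M - 1) * (2 * (L + R) - M) >= (2 * M - 1) * (2 * N * p + 2 - M))
        by (apply Z.le_ge, Z.mul_le_mono_nonneg_l; lia).
      assert (K3 : 2 * M * N - 2 * N - M >= M - 2).
      { assert (0 <= (N - 1) * (M - 1)) by (apply Z.mul_nonneg_nonneg; lia). lia. }
      assert (K4 : p * (2 * M * N - 2 * N - M) >= (2 * M - 1) * (M - 2)).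
      { assert (p * (2 * M * N - 2 * N - M) >= (2 * M - 1) * (2 * M * N - 2 * N - M))
          by (apply Z.le_ge, Z.mul_le_mono_nonneg_r; lia).
        assert ((2 * M - 1) * (2 * M * N - 2 * N - M) >= (2 * M - 1) * (M - 2))
          by (apply Z.le_ge, Z.mul_le_mono_nonneg_l; lia).
        lia. }
      assert (K5 : M * X >= M * ((2 * N + 1) * p)).
      { replace ((2 * M - 1) * (2 * N * p + 2 - M)) with
          (M * ((2 * N + 1) * p) + (p * (2 * M * N - 2 * N - M) - (2 * M - 1) * (M - 2))) in K2 by ring.
        lia. }
      apply Z.le_ge. apply (Z.mul_le_mono_pos_l _ _ M); lia.
Qed.

Theorem mainTheorem7 (p : Z) (m n : nat) (lam mu : nat -> Z) :
  prime p ->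
  (1 <= n)%nat ->
  (n + 2 <= m)%nat ->
  Z.of_nat m <= (p - 1) / 2 ->
  p >= lam 1%nat ->
  (forall k : nat, (1 <= k < m)%nat -> lam k >= lam (S k)) ->
  lam m > 0 ->
  zsum1 m lam >= Z.of_nat n * p + 1 ->
  (forall i j : nat, (1 <= i <= m)%nat -> (1 <= j <= m)%nat ->
     mu (i + j - 1)%nat >= Z.min (lam i + lam j - 1) p) ->
  zsum1 (2 * m - 1) mu >= (2 * Z.of_nat n + 1) * p.
Proof.
  intros _ Hn Hm Hdiv Hp1 Hdec Hpos HS Hmu.
  assert (Hd : 2 * ((p - 1) / 2) <= p - 1) by (apply Z.mul_div_le; lia).
  apply (gen p n Hn m lam mu); try assumption; lia.
Qed.
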